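(* The minimal typing algorithm of System $\mathsf{F_{<:}^{K\top}}$ terminates on every $\mathsf{F_{<:}^\top}$ term-in-context $\Theta\vdash^\top t$.
   Context: System $\mathsf{F_{<:}^{K\top}}$: raw types $T ::= \top \mid X \mid T\to T \mid \forall^{\mathsf K}(X<:T).T \mid \forall^\top(X<:T).T$, up to $\alpha$-conversion. Contexts $\Theta$: finite sequences of $X<:T$ or $x:T$ with distinct variables, each type well-formed over the preceding part. Raw terms $t ::= \mathsf{top}\mid x\mid\lambda(x:T).t\mid\Lambda(X<:T).t\mid t\,t\mid t\{T\}$. Algorithmic subtyping $\Theta\vdash_A S<:T$: (1) $\Theta\vdash_A T<:\top$; (2) $\Theta\vdash_A X<:X$; (3) if $T\not\equiv\top,X$ and $\Theta,X<:S,\Theta'\vdash_A S<:T$ then $\Theta,X<:S,\Theta'\vdash_A X<:T$; (4) from $S'<:S$, $T<:T'$ infer $S\to T<:S'\to T'$; (5) from $\Theta,X<:S\vdash_A T<:T'$ infer $\forall^{\mathsf K}(X<:S).T<:\forall^{\mathsf K}(X<:S).T'$; (6) from $\Theta\vdash_A T_0<:S_0$, $\Theta,X<:S_0\vdash_A S_1<:T_1$ infer $\forall^{\mathsf K}(X<:S_0).S_1<:\forall^\top(X<:T_0).T_1$; (7) from $\Theta\vdash_A T_0<:S_0$, $\Theta,X<:\top\vdash_A S_1<:T_1$ infer $\forall^\top(X<:S_0).S_1<:\forall^\top(X<:T_0).T_1$. The subtyping algorithm is the deterministic goal-directed search for such derivations (at most one rule applies to each judgement). $\Theta^*(T)=\Theta^*(S)$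 if $T\equiv X$ and $X<:S$ occurs in $\Theta$; $\Theta^*(T)=T$ otherwise. Minimal typing $\Theta\vdash_M t:T$: $\Theta,x:T,\Theta'\vdash_M x:T$; $\Theta\vdash_M\mathsf{top}:\top$; from $\Theta,x:S\vdash_M t:T$ infer $\Theta\vdash_M\lambda(x:S).t:S\to T$; from $\Theta\vdash_M r:R$, $\Theta\vdash_M s:S$, $\Theta\vdash S<:S'$ with $\Theta^*(R)=S'\to T$ infer $\Theta\vdash_M r\,s:T$; from $\Theta,X<:S\vdash_M t:T$ infer $\Theta\vdash_M\Lambda(X<:S).t:\forall^{\mathsf K}(X<:S).T$; from $\Theta\vdash_M r:R$, $\Theta\vdash S<:S'$ with $\Theta^*(R)=\forall^{\mathsf K}(X<:S').T$ or $\forall^\top(X<:S').T$ infer $\Theta\vdash_M r\{S\}:T[S/X]$. The minimal typing algorithm computes, by recursion on the structure of $t$, the unique $T$ with $\Theta\vdash_M t:T$ or rejects, deciding each subtyping premise $\Theta\vdash S<:S'$ by running the subtyping algorithm on $\Theta\vdash_A S<:S'$. An $\mathsf{F_{<:}^\top}$ term-in-context is one whose context and type annotations contain only $\forall^\top$ quantifiers. *)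

(* Defs.v *)
(* System F_{<:}^{K T}: raw syntax (de Bruijn), algorithmic subtyping and the
   minimal typing algorithm, given as big-step "run" relations of the
   deterministic algorithms (so that "the algorithm terminates on input i"
   is "some outcome is related to i"). *)
From Stdlib Require Import Arith List.
Import ListNotations.

(* ---------- Types ----------
   Type variables are de Bruijn indices counting only *type*-variable
   binders; alpha-equivalence is syntactic equality. *)
Inductive ty : Type :=
| TTop  : ty
| TVar  : nat -> ty
| TArr  : ty -> ty -> ty
| TAllK : ty -> ty -> ty   (* forall^K (X <: T1). T2, X bound in T2 *)
| TAllT : ty -> ty -> ty.  (* forall^T (X <: T1). T2, X bound in T2 *)

Fixpoint tshift (c : nat) (T : ty) : ty :=
  match T with
  | TTop => TTop
  | TVar n => if n <? c then TVar n else TVar (S n)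
  | TArr T1 T2 => TArr (tshift c T1) (tshift c T2)
  | TAllK T1 T2 => TAllK (tshift c T1) (tshift (S c) T2)
  | TAllT T1 T2 => TAllT (tshift c T1) (tshift (S c) T2)
  end.

Fixpoint tshiftn (k : nat) (T : ty) : ty :=
  match k with 0 => T | S k' => tshift 0 (tshiftn k' T) end.

Fixpoint tsubst (j : nat) (U : ty) (T : ty) : ty :=
  match T with
  | TTop => TTop
  | TVar n => if n <? j then TVar n
              else if n =? j then tshiftn j U
              else TVar (pred n)
  | TArr T1 T2 => TArr (tsubst j U T1) (tsubst j U T2)
  | TAllK T1 T2 => TAllK (tsubst j U T1) (tsubst (S j) U T2)
  | TAllT T1 T2 => TAllT (tsubst j U T1) (tsubst (S j) U T2)
  end.

Definition open_ty (T U : ty) : ty := tsubst 0 U T.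

(* ---------- Terms ----------
   Term variables are de Bruijn indices counting only term binders,
   type variables count only type binders. *)
Inductive tm : Type :=
| tTop  : tm
| tVar  : nat -> tm
| tAbs  : ty -> tm -> tm
| tTAbs : ty -> tm -> tm
| tApp  : tm -> tm -> tm
| tTApp : tm -> ty -> tm.

(* ---------- Contexts ----------  (head = most recent binding) *)
Inductive entry : Type :=
| CTVar : ty -> entry
| CVar  : ty -> entry.

Definition ctx := list entry.

(* bound of type variable n, expressed relative to the whole context *)
Fixpoint get_bound (G : ctx) (n : nat) : option ty :=
  match G with
  | [] => None
  | CTVar T :: G' =>
      match n with
      | 0 => Some (tshift 0 T)
      | S m => option_map (tshift 0) (get_bound G' m)
      end
  | CVar _ :: G' => get_bound G' n
  end.

(* type of term variable n, expressed relative to the whole context *)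
Fixpoint get_var (G : ctx) (n : nat) : option ty :=
  match G with
  | [] => None
  | CVar T :: G' =>
      match n with
      | 0 => Some T
      | S m => get_var G' m
      end
  | CTVar _ :: G' => option_map (tshift 0) (get_var G' n)
  end.

Fixpoint wf_ty (k : nat) (T : ty) : Prop :=
  match T with
  | TTop => True
  | TVar n => n < k
  | TArr T1 T2 => wf_ty k T1 /\ wf_ty k T2
  | TAllK T1 T2 => wf_ty k T1 /\ wf_ty (S k) T2
  | TAllT T1 T2 => wf_ty k T1 /\ wf_ty (S k) T2
  end.

Fixpoint ntv (G : ctx) : nat :=
  match G with
  | [] => 0
  | CTVar _ :: G' => S (ntv G')
  | CVar _ :: G' => ntv G'
  end.

Fixpoint nvar (G : ctx) : nat :=
  match G with
  | [] => 0
  | CTVar _ :: G' => nvar G'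
  | CVar _ :: G' => S (nvar G')
  end.

Fixpoint wf_ctx (G : ctx) : Prop :=
  match G with
  | [] => True
  | CTVar T :: G' => wf_ctx G' /\ wf_ty (ntv G') T
  | CVar T :: G' => wf_ctx G' /\ wf_ty (ntv G') T
  end.

Fixpoint wf_tm (kt kv : nat) (t : tm) : Prop :=
  match t with
  | tTop => True
  | tVar n => n < kv
  | tAbs T t1 => wf_ty kt T /\ wf_tm kt (S kv) t1
  | tTAbs T t1 => wf_ty kt T /\ wf_tm (S kt) kv t1
  | tApp t1 t2 => wf_tm kt kv t1 /\ wf_tm kt kv t2
  | tTApp t1 T => wf_tm kt kv t1 /\ wf_ty kt T
  end.

Fixpoint top_only_ty (T : ty) : Prop :=
  match T with
  | TTop | TVar _ => True
  | TArr T1 T2 => top_only_ty T1 /\ top_only_ty T2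
  | TAllK _ _ => False
  | TAllT T1 T2 => top_only_ty T1 /\ top_only_ty T2
  end.

Fixpoint top_only_ctx (G : ctx) : Prop :=
  match G with
  | [] => True
  | CTVar T :: G' => top_only_ty T /\ top_only_ctx G'
  | CVar T :: G' => top_only_ty T /\ top_only_ctx G'
  end.

Fixpoint top_only_tm (t : tm) : Prop :=
  match t with
  | tTop | tVar _ => True
  | tAbs T t1 => top_only_ty T /\ top_only_tm t1
  | tTAbs T t1 => top_only_ty T /\ top_only_tm t1
  | tApp t1 t2 => top_only_tm t1 /\ top_only_tm t2
  | tTApp t1 T => top_only_tm t1 /\ top_only_ty T
  end.

Definition Ftop_term_in_context (G : ctx) (t : tm) : Prop :=
  wf_ctx G /\ wf_tm (ntv G) (nvar G) t /\ top_only_ctx G /\ top_only_tm t.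

(* Premises are evaluated left to right; a failed premise makes
   the algorithm reject immediately; when no rule applies it rejects. *)

Definition no_rule (S T : ty) : bool :=
  match S, T with
  | _, TTop => false
  | TVar _, _ => false
  | TArr _ _, TArr _ _ => false
  | TAllK _ _, TAllK _ _ => false
  | TAllK _ _, TAllT _ _ => false
  | TAllT _ _, TAllT _ _ => false
  | _, _ => true
  end.

Inductive sub_run : ctx -> ty -> ty -> bool -> Prop :=
(* (1) *)
| SR_top : forall G S, sub_run G S TTop true
(* (2) *)
| SR_refl : forall G n, sub_run G (TVar n) (TVar n) true
(* (3) *)
| SR_var : forall G n B T b,
    T <> TTop -> T <> TVar n -> get_bound G n = Some B ->
    sub_run G B T b -> sub_run G (TVar n) T b
| SR_var_unbound : forall G n T,
    T <> TTop -> T <> TVar n -> get_bound G n = None ->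
    sub_run G (TVar n) T false
(* (4) *)
| SR_arr_fail : forall G S1 S2 T1 T2,
    sub_run G T1 S1 false -> sub_run G (TArr S1 S2) (TArr T1 T2) false
| SR_arr : forall G S1 S2 T1 T2 b,
    sub_run G T1 S1 true -> sub_run G S2 T2 b ->
    sub_run G (TArr S1 S2) (TArr T1 T2) b
(* (5) *)
| SR_allK : forall G S T T' b,
    sub_run (CTVar S :: G) T T' b -> sub_run G (TAllK S T) (TAllK S T') b
| SR_allK_fail : forall G S T S' T',
    S <> S' -> sub_run G (TAllK S T) (TAllK S' T') false
(* (6) *)
| SR_KT_fail : forall G S0 S1 T0 T1,
    sub_run G T0 S0 false -> sub_run G (TAllK S0 S1) (TAllT T0 T1) false
| SR_KT : forall G S0 S1 T0 T1 b,
    sub_run G T0 S0 true -> sub_run (CTVar S0 :: G) S1 T1 b ->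
    sub_run G (TAllK S0 S1) (TAllT T0 T1) b
(* (7) *)
| SR_TT_fail : forall G S0 S1 T0 T1,
    sub_run G T0 S0 false -> sub_run G (TAllT S0 S1) (TAllT T0 T1) false
| SR_TT : forall G S0 S1 T0 T1 b,
    sub_run G T0 S0 true -> sub_run (CTVar TTop :: G) S1 T1 b ->
    sub_run G (TAllT S0 S1) (TAllT T0 T1) b
| SR_none : forall G S T, no_rule S T = true -> sub_run G S T false.

Inductive expose : ctx -> ty -> ty -> Prop :=
| EX_var : forall G n B R,
    get_bound G n = Some B -> expose G B R -> expose G (TVar n) R
| EX_var_unbound : forall G n,
    get_bound G n = None -> expose G (TVar n) (TVar n)
| EX_other : forall G T, (forall n, T <> TVar n) -> expose G T T.

(* ---------- The minimal typing algorithm ----------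
   ty_run G t (Some T): the algorithm terminates returning T;
   ty_run G t None    : the algorithm terminates rejecting t. *)
Inductive ty_run : ctx -> tm -> option ty -> Prop :=
| TR_top : forall G, ty_run G tTop (Some TTop)
| TR_var : forall G n, ty_run G (tVar n) (get_var G n)
| TR_abs : forall G S t r,
    ty_run (CVar S :: G) t r -> ty_run G (tAbs S t) (option_map (TArr S) r)
| TR_tabs : forall G S t r,
    ty_run (CTVar S :: G) t r -> ty_run G (tTAbs S t) (option_map (TAllK S) r)
| TR_app_fail1 : forall G r s,
    ty_run G r None -> ty_run G (tApp r s) None
| TR_app_fail2 : forall G r s R,
    ty_run G r (Some R) -> ty_run G s None -> ty_run G (tApp r s) None
| TR_app_notarr : forall G r s R S R',
    ty_run G r (Some R) -> ty_run G s (Some S) -> expose G R R' ->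
    (forall A B, R' <> TArr A B) -> ty_run G (tApp r s) None
| TR_app : forall G r s R S S' T b,
    ty_run G r (Some R) -> ty_run G s (Some S) -> expose G R (TArr S' T) ->
    sub_run G S S' b ->
    ty_run G (tApp r s) (if b then Some T else None)
| TR_tapp_fail : forall G r S,
    ty_run G r None -> ty_run G (tTApp r S) None
| TR_tapp_notall : forall G r S R R',
    ty_run G r (Some R) -> expose G R R' ->
    (forall A B, R' <> TAllK A B) -> (forall A B, R' <> TAllT A B) ->
    ty_run G (tTApp r S) None
| TR_tapp_K : forall G r S R S' T b,
    ty_run G r (Some R) -> expose G R (TAllK S' T) -> sub_run G S S' b ->
    ty_run G (tTApp r S) (if b then Some (open_ty T S) else None)
| TR_tapp_T : forall G r S R S' T b,
    ty_run G r (Some R) -> expose G R (TAllT S' T) -> sub_run G S S' b ->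
    ty_run G (tTApp r S) (if b then Some (open_ty T S) else None).

Definition min_typing_terminates (G : ctx) (t : tm) : Prop :=
  exists r, ty_run G t r.

(* Main.v *)
Require Import Defs.
From Stdlib Require Import Arith List Lia.
Import ListNotations.

Fixpoint wt (env : list nat) (T : ty) : nat :=
  match T with
  | TTop => 1
  | TVar n => nth n env 1
  | TArr A B => 1 + wt env A + wt env B
  | TAllK A B => 1 + wt env A + wt ((1 + wt env A) :: env) B
  | TAllT A B => 1 + wt env A + wt (2 :: env) B
  end.

Fixpoint ins (c a : nat) (env : list nat) : list nat :=
  match c, env with
  | 0, _ => a :: env
  | S c', x :: env' => x :: ins c' a env'
  | S c', [] => 1 :: ins c' a []
  end.

Lemma nth_ins : forall c a env n,
  nth n (ins c a env) 1 =
  (if n <? c then nth n env 1 else if n =? c then a else nth (n-1) env 1).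
Proof.
  induction c; intros a env n.
  - destruct n; simpl; auto. rewrite Nat.sub_0_r; auto.
  - destruct env; destruct n; simpl; auto; rewrite IHc.
    all: rewrite ?Nat.sub_0_r; destruct (Nat.ltb_spec n c); destruct (Nat.ltb_spec (S n) (S c)); try lia;
      destruct (Nat.eqb_spec n c); try lia; destruct n; simpl; auto; try lia; rewrite ?Nat.sub_0_r; auto; destruct n; auto.
Qed.

Lemma ins_cons : forall c a x env, ins (S c) a (x :: env) = x :: ins c a env.
Proof. reflexivity. Qed.

Lemma wt_shift : forall T c a env, wt (ins c a env) (tshift c T) = wt env T.
Proof.
  induction T; intros c a env; simpl.
  - auto.
  - destruct (n <? c) eqn:E; simpl; rewrite nth_ins.
    + rewrite E; auto.
    + apply Nat.ltb_ge in E.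
      destruct (Nat.ltb_spec (S n) c); [lia|].
      destruct (Nat.eqb_spec (S n) c); [lia|]. simpl. rewrite Nat.sub_0_r; auto.
  - rewrite IHT1, IHT2; auto.
  - rewrite IHT1, <- ins_cons, IHT2; auto.
  - rewrite IHT1, <- ins_cons, IHT2; auto.
Qed.

Fixpoint cenv (G : ctx) : list nat :=
  match G with
  | [] => []
  | CTVar B :: G' => (1 + wt (cenv G') B) :: cenv G'
  | CVar _ :: G' => cenv G'
  end.

Lemma get_bound_wt : forall G n B, get_bound G n = Some B ->
  nth n (cenv G) 1 = 1 + wt (cenv G) B.
Proof.
  induction G as [|e G IH]; intros n B H; simpl in H; [discriminate|].
  destruct e as [T|T]; simpl.
  - destruct n.
    + inversion H; subst. change (_ :: cenv G) with (ins 0 (1 + wt (cenv G) T) (cenv G)).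
      rewrite wt_shift; auto.
    + destruct (get_bound G n) eqn:E; simpl in H; inversion H; subst.
      rewrite (IH _ _ E).
      change (_ :: cenv G) with (ins 0 (1 + wt (cenv G) T) (cenv G)).
      rewrite wt_shift; auto.
  - apply IH; auto.
Qed.

Fixpoint pos_ty (T : ty) : Prop :=
  match T with
  | TTop | TVar _ => True
  | TArr A B | TAllK A B | TAllT A B => top_only_ty A /\ pos_ty B
  end.

Lemma top_pos : forall T, top_only_ty T -> pos_ty T.
Proof. induction T; simpl; tauto. Qed.

Lemma top_shift : forall T c, top_only_ty T -> top_only_ty (tshift c T).
Proof.
  induction T; simpl; intros; try destruct (_ <? _); simpl; intuition.
Qed.

Lemma top_shiftn : forall k T, top_only_ty T -> top_only_ty (tshiftn k T).
Proof. induction k; simpl; intros; auto. apply top_shift; auto. Qed.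

Lemma top_subst : forall T j U, top_only_ty T -> top_only_ty U ->
  top_only_ty (tsubst j U T).
Proof.
  induction T; simpl; intros; try tauto.
  - destruct (n <? j); simpl; auto. destruct (n =? j); simpl; auto.
    apply top_shiftn; auto.
  - intuition.
  - intuition.
Qed.

Lemma pos_subst : forall T j U, pos_ty T -> top_only_ty U ->
  pos_ty (tsubst j U T).
Proof.
  induction T; simpl; intros; try tauto.
  - destruct (n <? j); simpl; auto. destruct (n =? j); simpl; auto.
    apply top_pos, top_shiftn; auto.
  - split; [apply top_subst|apply IHT2]; tauto.
  - split; [apply top_subst|apply IHT2]; tauto.
  - split; [apply top_subst|apply IHT2]; tauto.
Qed.

Lemma get_bound_top : forall G n B, top_only_ctx G -> get_bound G n = Some B ->
  top_only_ty B.
Proof.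
  induction G as [|e G IH]; intros n B HG H; simpl in H; [discriminate|].
  destruct e as [T|T]; simpl in HG.
  - destruct n.
    + inversion H; subst. apply top_shift; tauto.
    + destruct (get_bound G n) eqn:E; simpl in H; inversion H; subst.
      apply top_shift; eapply IH; eauto; tauto.
  - eapply IH; eauto; tauto.
Qed.

Lemma get_var_top : forall G n B, top_only_ctx G -> get_var G n = Some B ->
  top_only_ty B.
Proof.
  induction G as [|e G IH]; intros n B HG H; simpl in H; [discriminate|].
  destruct e as [T|T]; simpl in HG.
  - destruct (get_var G n) eqn:E; simpl in H; inversion H; subst.
    apply top_shift; eapply IH; eauto; tauto.
  - destruct n.
    + inversion H; subst; tauto.
    + eapply IH; eauto; tauto.
Qed.

Lemma sub_N : forall m G S T, wt (cenv G) S + wt (cenv G) T < m ->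
  top_only_ctx G -> top_only_ty S -> top_only_ty T -> exists b, sub_run G S T b.
Proof.
  induction m; intros G S T Hlt HG HS HT; [lia|].
  destruct S as [|n|S1 S2|S1 S2|S1 S2].
  - destruct T; try (exists true; constructor; fail);
      try (exists false; apply SR_none; reflexivity); simpl in *; tauto.
  - assert (T = TTop \/ T <> TTop) as [->|HT1]
      by (destruct T; auto; right; discriminate).
    { exists true; constructor. }
    assert (T = TVar n \/ T <> TVar n) as [->|HT2].
    { destruct T; try (right; discriminate).
      destruct (Nat.eq_dec n0 n); [left; congruence | right; congruence]. }
    { exists true; constructor. }
    destruct (get_bound G n) as [B|] eqn:E.
    + pose proof (get_bound_wt _ _ _ E) as W. simpl in Hlt.
      destruct (IHm G B T) as [b Hb]; [lia|auto|eapply get_bound_top; eauto|auto|].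
      exists b; eapply SR_var; eauto.
    + exists false; apply SR_var_unbound; auto.
  - destruct T as [|k|T1 T2|T1 T2|T1 T2];
      try (exists true; constructor; fail);
      try (exists false; apply SR_none; reflexivity; fail);
      try (simpl in *; tauto).
    simpl in *.
    destruct (IHm G T1 S1) as [b1 H1]; [lia|tauto|tauto|tauto|].
    destruct b1.
    + destruct (IHm G S2 T2) as [b2 H2]; [lia|tauto|tauto|tauto|].
      exists b2; apply SR_arr; auto.
    + exists false; apply SR_arr_fail; auto.
  - simpl in HS; tauto.
  - destruct T as [|k|T1 T2|T1 T2|T1 T2];
      try (exists true; constructor; fail);
      try (exists false; apply SR_none; reflexivity; fail);
      try (simpl in *; tauto).
    simpl in *.
    destruct (IHm G T1 S1) as [b1 H1]; [lia|tauto|tauto|tauto|].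
    destruct b1.
    + destruct (IHm (CTVar TTop :: G) S2 T2) as [b2 H2]; [simpl; lia|simpl; tauto|tauto|tauto|].
      exists b2; apply SR_TT; auto.
    + exists false; apply SR_TT_fail; auto.
Qed.

Lemma sub_N' : forall G S T, top_only_ctx G -> top_only_ty S -> top_only_ty T ->
  exists b, sub_run G S T b.
Proof. intros; eapply sub_N; eauto. Qed.

Lemma sub_P : forall S, pos_ty S -> forall G T, top_only_ctx G -> top_only_ty T ->
  exists b, sub_run G S T b.
Proof.
  induction S as [|n|S1 _ S2 IH|S1 _ S2 IH|S1 _ S2 IH]; intros HS G T HG HT.
  - apply sub_N'; simpl; auto.
  - apply sub_N'; simpl; auto.
  - simpl in HS. destruct T as [|k|T1 T2|T1 T2|T1 T2];
      try (exists true; constructor; fail);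
      try (exists false; apply SR_none; reflexivity; fail);
      try (simpl in *; tauto).
    simpl in HT.
    destruct (sub_N' G T1 S1) as [b1 H1]; [tauto|tauto|tauto|].
    destruct b1.
    + destruct (IH (proj2 HS) G T2) as [b2 H2]; [tauto|tauto|].
      exists b2; apply SR_arr; auto.
    + exists false; apply SR_arr_fail; auto.
  - simpl in HS. destruct T as [|k|T1 T2|T1 T2|T1 T2];
      try (exists true; constructor; fail);
      try (exists false; apply SR_none; reflexivity; fail);
      try (simpl in *; tauto).
    simpl in HT.
    destruct (sub_N' G T1 S1) as [b1 H1]; [tauto|tauto|tauto|].
    destruct b1.
    + destruct (IH (proj2 HS) (CTVar S1 :: G) T2) as [b2 H2]; [simpl; tauto|tauto|].
      exists b2; apply SR_KT; auto.
    + exists false; apply SR_KT_fail; auto.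
  - simpl in HS. destruct T as [|k|T1 T2|T1 T2|T1 T2];
      try (exists true; constructor; fail);
      try (exists false; apply SR_none; reflexivity; fail);
      try (simpl in *; tauto).
    simpl in HT.
    destruct (sub_N' G T1 S1) as [b1 H1]; [tauto|tauto|tauto|].
    destruct b1.
    + destruct (IH (proj2 HS) (CTVar TTop :: G) T2) as [b2 H2]; [simpl; tauto|tauto|].
      exists b2; apply SR_TT; auto.
    + exists false; apply SR_TT_fail; auto.
Qed.

Lemma expose_ex : forall m G R, wt (cenv G) R < m -> exists R', expose G R R'.
Proof.
  induction m; intros G R Hlt; [lia|].
  destruct R; try (eexists; apply EX_other; intros k E; discriminate).
  destruct (get_bound G n) as [B|] eqn:E.
  - pose proof (get_bound_wt _ _ _ E). simpl in Hlt.
    destruct (IHm G B) as [R' HR']; [lia|].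
    exists R'; eapply EX_var; eauto.
  - eexists; apply EX_var_unbound; auto.
Qed.

Lemma expose_pos : forall G R R', expose G R R' -> top_only_ctx G -> pos_ty R -> pos_ty R'.
Proof.
  induction 1; intros HG HR; auto.
  apply IHexpose; auto. apply top_pos; eapply get_bound_top; eauto.
Qed.

Lemma typing : forall t G, top_only_ctx G -> top_only_tm t ->
  exists r, ty_run G t r /\ (forall T, r = Some T -> pos_ty T).
Proof.
  induction t as [| n | S t IH | S t IH | t1 IH1 t2 IH2 | t IH S]; intros G HG Ht;
    simpl in Ht.
  - exists (Some TTop); split; [constructor | intros T E; inversion E; exact I].
  - exists (get_var G n); split; [constructor|].
    intros; apply top_pos; eapply get_var_top; eauto.
  - destruct (IH (CVar S :: G)) as [r [Hr Hp]]; [simpl; tauto|tauto|].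
    exists (option_map (TArr S) r); split; [constructor; auto|].
    intros T E; destruct r; simpl in E; inversion E; subst; simpl; split; auto; tauto.
  - destruct (IH (CTVar S :: G)) as [r [Hr Hp]]; [simpl; tauto|tauto|].
    exists (option_map (TAllK S) r); split; [constructor; auto|].
    intros T E; destruct r; simpl in E; inversion E; subst; simpl; split; auto; tauto.
  - destruct (IH1 G HG (proj1 Ht)) as [r1 [H1 P1]].
    destruct r1 as [R|]; [|exists None; split; [apply TR_app_fail1; auto|discriminate]].
    destruct (IH2 G HG (proj2 Ht)) as [r2 [H2 P2]].
    destruct r2 as [S|]; [|exists None; split; [eapply TR_app_fail2; eauto|discriminate]].
    destruct (expose_ex (Datatypes.S (wt (cenv G) R)) G R) as [R' HR']; [lia|].
    pose proof (expose_pos _ _ _ HR' HG (P1 R eq_refl)) as PR.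
    destruct R' as [| | S' T | ? ? | ? ?];
      try (exists None; split; [eapply TR_app_notarr; eauto; intros A B E; discriminate | discriminate]).
    simpl in PR.
    destruct (sub_P S (P2 S eq_refl) G S') as [b Hb]; [auto|tauto|].
    exists (if b then Some T else None); split; [eapply TR_app; eauto|].
    intros T0 E; destruct b; inversion E; subst; tauto.
  - destruct (IH G HG (proj1 Ht)) as [r1 [H1 P1]].
    destruct r1 as [R|]; [|exists None; split; [apply TR_tapp_fail; auto|discriminate]].
    destruct (expose_ex (Datatypes.S (wt (cenv G) R)) G R) as [R' HR']; [lia|].
    pose proof (expose_pos _ _ _ HR' HG (P1 R eq_refl)) as PR.
    destruct R' as [| | ? ? | S' T | S' T];
      try (exists None; split; [eapply TR_tapp_notall; eauto; intros A B E; discriminate | discriminate]).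
    + simpl in PR.
      destruct (sub_P S (top_pos _ (proj2 Ht)) G S') as [b Hb]; [auto|tauto|].
      exists (if b then Some (open_ty T S) else None); split; [eapply TR_tapp_K; eauto|].
      intros T0 E; destruct b; inversion E; subst.
      apply pos_subst; tauto.
    + simpl in PR.
      destruct (sub_P S (top_pos _ (proj2 Ht)) G S') as [b Hb]; [auto|tauto|].
      exists (if b then Some (open_ty T S) else None); split; [eapply TR_tapp_T; eauto|].
      intros T0 E; destruct b; inversion E; subst.
      apply pos_subst; tauto.
Qed.

Theorem proposition8p4 :
  forall (G : ctx) (t : tm),
    Ftop_term_in_context G t -> min_typing_terminates G t.
Proof.
  intros G t [_ [_ [HG Ht]]].
  destruct (typing t G HG Ht) as [r [H _]]; exists r; auto.
Qed.
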